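(* For every $n$, every graph $G=(V,E)$ on $V=\{1,\ldots,n\}$, every bilinear function $b(\mathbf x)=\sum_{ij\in E}a_{ij}x_ix_j$ with real coefficients, and every $\mathbf x\in[0,1]^n$, \[\operatorname{mcgap}[b](\mathbf x)\leqslant 600\sqrt n\,\operatorname{chgap}[b](\mathbf x).\]
   Context: Let $G=(V,E)$ be an undirected graph with $V=\{1,\ldots,n\}$; write $ij$ for the edge $\{i,j\}$. A bilinear function is $b:[0,1]^n\to\mathbb R$, $b(\mathbf x)=\sum_{ij\in E}a_{ij}x_ix_j$ with real coefficients $a_{ij}$. Its graph is $B=\{(\mathbf x,z)\in[0,1]^n\times\mathbb R: z=b(\mathbf x)\}$, and $\operatorname{conv}(B)$ is its convex hull. The McCormick polytopes are $P=\{(\mathbf x,\mathbf y)\in[0,1]^n\times[0,1]^{|E|}: y_{ij}\le x_i,\ y_{ij}\le x_j,\ y_{ij}\ge x_i+x_j-1\ \forall ij\in E\}$ and $Q=\{(\mathbf x,z)\in[0,1]^n\times\mathbb R:\exists\mathbf y\in[0,1]^{|E|}\text{ with }(\mathbf x,\mathbf y)\in P,\ z=\sum_{ij\in E}a_{ij}y_{ij}\}$. Define for $\mathbf x\in[0,1]^n$: $\operatorname{cav}[b](\mathbf x)=\max\{z:(\mathbf x,z)\in\operatorname{conv}(B)\}$, $\operatorname{vex}[b](\mathbf x)=\min\{z:(\mathbf x,z)\in\operatorname{conv}(B)\}$, $\operatorname{mcu}[b](\mathbf x)=\max\{z:(\mathbf x,z)\in Q\}$, $\operatorname{mcl}[b](\mathbf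 x)=\min\{z:(\mathbf x,z)\in Q\}$, the convex hull gap $\operatorname{chgap}[b]=\operatorname{cav}[b]-\operatorname{vex}[b]$ and the McCormick gap $\operatorname{mcgap}[b]=\operatorname{mcu}[b]-\operatorname{mcl}[b]$. *)

(* Defs.v *)
From Stdlib Require Import Reals List.
Import ListNotations.
Open Scope R_scope.

(* Vertices are 0,...,n-1 (the paper's 1,...,n shifted by one).
   Points of R^n are functions nat -> R; only coordinates < n matter. *)

Fixpoint sumR (m : nat) (f : nat -> R) : R :=
  match m with
  | O => 0
  | S k => sumR k f + f k
  end.

Definition in_box (n : nat) (x : nat -> R) : Prop :=
  forall i, (i < n)%nat -> 0 <= x i <= 1.

(* A simple undirected graph on {0,..,n-1}: each edge {i,j} is stored once
   as the pair (i,j) with i < j < n, without repetitions. *)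
Definition is_graph (n : nat) (E : list (nat * nat)) : Prop :=
  NoDup E /\ forall i j, In (i, j) E -> (i < j < n)%nat.

Definition bilin (E : list (nat * nat)) (a : nat -> nat -> R) (x : nat -> R) : R :=
  fold_right (fun e acc => a (fst e) (snd e) * x (fst e) * x (snd e) + acc) 0 E.

(* (x,z) in conv(B), B = graph of b over [0,1]^n:
   a finite convex combination of points (p_k, b(p_k)), p_k in [0,1]^n. *)
Definition in_convB (n : nat) (E : list (nat * nat)) (a : nat -> nat -> R)
    (x : nat -> R) (z : R) : Prop :=
  exists (m : nat) (lam : nat -> R) (p : nat -> nat -> R),
    (forall k, (k < m)%nat -> 0 <= lam k) /\
    sumR m lam = 1 /\
    (forall k, (k < m)%nat -> in_box n (p k)) /\
    (forall i, (i < n)%nat -> x i = sumR m (fun k => lam k * p k i)) /\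
    z = sumR m (fun k => lam k * bilin E a (p k)).

Definition in_P (n : nat) (E : list (nat * nat)) (x : nat -> R) (y : nat -> nat -> R) : Prop :=
  in_box n x /\
  forall i j, In (i, j) E ->
    0 <= y i j <= 1 /\ y i j <= x i /\ y i j <= x j /\ x i + x j - 1 <= y i j.

Definition in_Q (n : nat) (E : list (nat * nat)) (a : nat -> nat -> R)
    (x : nat -> R) (z : R) : Prop :=
  exists y : nat -> nat -> R, in_P n E x y /\
    z = fold_right (fun e acc => a (fst e) (snd e) * y (fst e) (snd e) + acc) 0 E.

Definition is_max (S : R -> Prop) (z : R) : Prop := S z /\ forall w, S w -> w <= z.
Definition is_min (S : R -> Prop) (z : R) : Prop := S z /\ forall w, S w -> z <= w.

(* Main.v *)
Require Import Defs.
From Stdlib Require Import Reals List.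
Open Scope R_scope.
From Stdlib Require Import Lra Lia Psatz FunctionalExtensionality Bool.
Import ListNotations.

Lemma sumR_ext m f g : (forall i, (i < m)%nat -> f i = g i) -> sumR m f = sumR m g.
Proof. induction m; simpl; intros H; auto. rewrite IHm by (intros; apply H; lia). rewrite H by lia. auto. Qed.

Lemma sumR_plus m f g : sumR m (fun i => f i + g i) = sumR m f + sumR m g.
Proof. induction m; simpl; [lra|]. rewrite IHm. lra. Qed.

Lemma sumR_scal m c f : sumR m (fun i => c * f i) = c * sumR m f.
Proof. induction m; simpl; [lra|]. rewrite IHm. lra. Qed.

Lemma sumR_le m f g : (forall i, (i < m)%nat -> f i <= g i) -> sumR m f <= sumR m g.
Proof. induction m; simpl; intros H; [lra|]. pose proof (H m ltac:(lia)). pose proof (IHm ltac:(intros; apply H; lia)). lra. Qed.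

Lemma sumR_zero m : sumR m (fun _ => 0) = 0.
Proof. induction m; simpl; [lra|]. rewrite IHm. lra. Qed.

Lemma sumR_shift m f : sumR (S m) f = f O + sumR m (fun k => f (S k)).
Proof. induction m; simpl in *; [lra|]. rewrite IHm. lra. Qed.

Lemma sumR_delta m b f : (b < m)%nat -> sumR m (fun j => if Nat.eqb b j then f j else 0) = f b.
Proof.
  induction m; intros Hb; [lia|]. simpl.
  destruct (Nat.eq_dec b m) as [->|Hne].
  - rewrite Nat.eqb_refl. rewrite sumR_ext with (g := fun _ => 0).
    + rewrite sumR_zero; lra.
    + intros i Hi. destruct (Nat.eqb m i) eqn:E; auto. apply Nat.eqb_eq in E; lia.
  - rewrite IHm by lia. destruct (Nat.eqb b m) eqn:E; [apply Nat.eqb_eq in E; lia|lra].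
Qed.

Definition lsum {A : Type} (f : A -> R) (l : list A) : R :=
  fold_right (fun e acc => f e + acc) 0 l.

Lemma lsum_ext_In {A} (f g : A -> R) l : (forall e, In e l -> f e = g e) -> lsum f l = lsum g l.
Proof. induction l; simpl; intros H; auto. rewrite H by auto. rewrite IHl by auto. auto. Qed.

Lemma lsum_le_In {A} (f g : A -> R) l : (forall e, In e l -> f e <= g e) -> lsum f l <= lsum g l.
Proof. induction l; simpl; intros H; [lra|]. pose proof (H a (or_introl eq_refl)). pose proof (IHl ltac:(auto)). lra. Qed.

Lemma lsum_plus {A} (f g : A -> R) l : lsum (fun e => f e + g e) l = lsum f l + lsum g l.
Proof. induction l; simpl; [lra|]. rewrite IHl. lra. Qed.

Lemma lsum_scal {A} c (f : A -> R) l : lsum (fun e => c * f e) l = c * lsum f l.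
Proof. induction l; simpl; [lra|]. rewrite IHl. lra. Qed.

Lemma lsum_minus {A} (f g : A -> R) l : lsum (fun e => f e - g e) l = lsum f l - lsum g l.
Proof. induction l; simpl; [lra|]. rewrite IHl. lra. Qed.

Lemma lsum_swap {A B} (c : A -> R) (h : B -> A -> R) (P : list A) (E : list B) :
  lsum (fun p => c p * lsum (fun e => h e p) E) P = lsum (fun e => lsum (fun p => c p * h e p) P) E.
Proof.
  induction E; simpl.
  - unfold lsum at 1. induction P; simpl; [lra|]. unfold lsum in IHP. rewrite IHP. lra.
  - rewrite <- IHE. rewrite <- lsum_plus. apply lsum_ext_In. intros; lra.
Qed.

Lemma sumR_nth (P : list (R*R)) g : sumR (length P) (fun k => g (nth k P (0,0))) = lsum g P.
Proof. induction P; simpl length; [reflexivity|]. rewrite sumR_shift. simpl. rewrite IHP. reflexivity. Qed.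

Lemma sumR_lsum {A} m (f : nat -> A -> R) (l : list A) :
  sumR m (fun i => lsum (f i) l) = lsum (fun e => sumR m (fun i => f i e)) l.
Proof.
  induction l; simpl.
  - apply sumR_zero.
  - unfold lsum in *. rewrite sumR_plus. rewrite IHl. reflexivity.
Qed.

Lemma sumR_S m f : sumR (S m) f = sumR m f + f m.
Proof. reflexivity. Qed.

Lemma Rabs_sq x : Rabs x ^ 2 = x ^ 2.
Proof. destruct (Rcase_abs x); [rewrite Rabs_left by lra|rewrite Rabs_right by lra]; ring. Qed.

Lemma lsum_cons {A} (f : A -> R) a l : lsum f (a :: l) = f a + lsum f l.
Proof. reflexivity. Qed.
Lemma lsum_nil {A} (f : A -> R) : lsum f nil = 0.
Proof. reflexivity. Qed.

Lemma sumR_zero_ext m f : (forall i, (i < m)%nat -> f i = 0) -> sumR m f = 0.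
Proof. intros H. rewrite (sumR_ext m f (fun _ => 0)) by auto. apply sumR_zero. Qed.

Definition upd (v : nat -> R) (k : nat) (s : R) : nat -> R :=
  fun j => if Nat.eqb j k then s else v j.

Fixpoint Avg (k : nat) (f : (nat -> R) -> R) : R :=
  match k with
  | O => f (fun _ => 0)
  | S k' => (Avg k' (fun v => f (upd v k' 1)) + Avg k' (fun v => f (upd v k' (-1)))) / 2
  end.

Definition signs (k : nat) (v : nat -> R) : Prop :=
  forall j, (j < k)%nat -> v j = 1 \/ v j = -1.

Lemma signs_upd k v s : signs k v -> (s = 1 \/ s = -1) -> signs (S k) (upd v k s).
Proof.
  intros H Hs j Hj. unfold upd. destruct (Nat.eqb j k) eqn:E; auto.
  apply Nat.eqb_neq in E. apply H. lia.
Qed.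

Lemma Avg_mono k f g : (forall v, signs k v -> f v <= g v) -> Avg k f <= Avg k g.
Proof.
  revert f g; induction k; intros f g H; simpl.
  - apply H. intros j Hj; lia.
  - assert (H1 := IHk (fun v => f (upd v k 1)) (fun v => g (upd v k 1))).
    assert (H2 := IHk (fun v => f (upd v k (-1))) (fun v => g (upd v k (-1)))).
    simpl in H1, H2.
    assert (A1 : Avg k (fun v => f (upd v k 1)) <= Avg k (fun v => g (upd v k 1))).
    { apply H1. intros v Hv. apply H. apply signs_upd; auto. }
    assert (A2 : Avg k (fun v => f (upd v k (-1))) <= Avg k (fun v => g (upd v k (-1)))).
    { apply H2. intros v Hv. apply H. apply signs_upd; auto. }
    lra.
Qed.

Lemma Avg_ext k f g : (forall v, signs k v -> f v = g v) -> Avg k f = Avg k g.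
Proof.
  intros H. apply Rle_antisym; apply Avg_mono; intros v Hv; rewrite H by auto; lra.
Qed.

Lemma Avg_plus k f g : Avg k (fun v => f v + g v) = Avg k f + Avg k g.
Proof.
  revert f g; induction k; intros f g; simpl; [reflexivity|].
  rewrite (IHk (fun v => f (upd v k 1)) (fun v => g (upd v k 1))).
  rewrite (IHk (fun v => f (upd v k (-1))) (fun v => g (upd v k (-1)))). lra.
Qed.

Lemma Avg_scal k c f : Avg k (fun v => c * f v) = c * Avg k f.
Proof.
  revert f; induction k; intros f; simpl; [reflexivity|].
  rewrite (IHk (fun v => f (upd v k 1))).
  rewrite (IHk (fun v => f (upd v k (-1)))). lra.
Qed.

Lemma Avg_const k c : Avg k (fun _ => c) = c.
Proof. induction k; simpl; [reflexivity|]. rewrite IHk. lra. Qed.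

Lemma Avg_exists k f : exists v, signs k v /\ Avg k f <= f v.
Proof.
  revert f; induction k; intros f; simpl.
  - exists (fun _ => 0). split; [intros j Hj; lia| lra].
  - destruct (IHk (fun v => f (upd v k 1))) as [v1 [S1 H1]].
    destruct (IHk (fun v => f (upd v k (-1)))) as [v2 [S2 H2]].
    destruct (Rle_dec (f (upd v2 k (-1))) (f (upd v1 k 1))).
    + exists (upd v1 k 1). split; [apply signs_upd; auto| lra].
    + exists (upd v2 k (-1)). split; [apply signs_upd; auto| lra].
Qed.

Lemma Avg_sumR k m (F : nat -> (nat -> R) -> R) :
  Avg k (fun v => sumR m (fun i => F i v)) = sumR m (fun i => Avg k (F i)).
Proof.
  induction m; simpl.
  - apply Avg_const.
  - rewrite Avg_plus. rewrite IHm. reflexivity.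
Qed.

Lemma Avg_m1 k i : (i < k)%nat -> Avg k (fun v => v i) = 0.
Proof.
  induction k; intros Hi; [lia|]. simpl. unfold upd.
  destruct (Nat.eq_dec i k) as [->|Hne].
  - rewrite Nat.eqb_refl. rewrite !Avg_const. lra.
  - assert (E : Nat.eqb i k = false) by (apply Nat.eqb_neq; auto).
    rewrite E. rewrite IHk by lia. lra.
Qed.

Lemma Avg_m2 k i j : (i < k)%nat -> (j < k)%nat ->
  Avg k (fun v => v i * v j) = if Nat.eqb i j then 1 else 0.
Proof.
  induction k; intros Hi Hj; [lia|]. simpl. unfold upd.
  destruct (Nat.eq_dec i k) as [->|Hne]; destruct (Nat.eq_dec j k) as [->|Hne'].
  - rewrite Nat.eqb_refl. rewrite !Avg_const. lra.
  - rewrite Nat.eqb_refl. assert (E : Nat.eqb j k = false) by (apply Nat.eqb_neq; auto).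
    rewrite E. rewrite (Avg_scal k 1 (fun v => v j)). rewrite (Avg_scal k (-1) (fun v => v j)).
    rewrite Avg_m1 by lia. assert (E2 : Nat.eqb k j = false) by (apply Nat.eqb_neq; auto). rewrite E2. lra.
  - rewrite Nat.eqb_refl. assert (E : Nat.eqb i k = false) by (apply Nat.eqb_neq; auto).
    rewrite E.
    rewrite (Avg_ext k (fun v => v i * 1) (fun v => 1 * v i)) by (intros; lra).
    rewrite (Avg_ext k (fun v => v i * -1) (fun v => -1 * v i)) by (intros; lra).
    rewrite !Avg_scal. rewrite Avg_m1 by lia. assert (E3 : Nat.eqb i k = false) by (apply Nat.eqb_neq; auto). try rewrite E3. lra.
  - assert (E : Nat.eqb i k = false) by (apply Nat.eqb_neq; auto).
    assert (E' : Nat.eqb j k = false) by (apply Nat.eqb_neq; auto).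
    rewrite E, E'. rewrite IHk by lia. lra.
Qed.

Lemma Avg_S k f : Avg (S k) f = (Avg k (fun v => f (upd v k 1)) + Avg k (fun v => f (upd v k (-1)))) / 2.
Proof. reflexivity. Qed.

Definition Yl (k : nat) (b : nat -> R) (v : nat -> R) : R := sumR k (fun j => b j * v j).

Lemma Yl_upd k b v s : Yl (S k) b (upd v k s) = Yl k b v + b k * s.
Proof.
  unfold Yl. simpl. f_equal.
  - apply sumR_ext. intros i Hi. unfold upd. destruct (Nat.eqb i k) eqn:E; auto.
    apply Nat.eqb_eq in E; lia.
  - unfold upd. rewrite Nat.eqb_refl. auto.
Qed.

Lemma Avg_M2 k b : Avg k (fun v => (Yl k b v)^2) = sumR k (fun j => b j ^ 2).
Proof.
  induction k; [simpl Avg| rewrite Avg_S].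
  - unfold Yl; simpl; lra.
  - rewrite (Avg_ext k (fun v => Yl (S k) b (upd v k 1) ^ 2) (fun v => (Yl k b v + b k)^2))
      by (intros; rewrite Yl_upd; f_equal; lra).
    rewrite (Avg_ext k (fun v => Yl (S k) b (upd v k (-1)) ^ 2) (fun v => (Yl k b v - b k)^2))
      by (intros; rewrite Yl_upd; f_equal; lra).
    rewrite <- Avg_plus.
    rewrite (Avg_ext k _ (fun v => 2 * (Yl k b v ^2) + 2 * (b k ^ 2))) by (intros; lra).
    rewrite Avg_plus, !Avg_scal, Avg_const, IHk. simpl sumR. lra.
Qed.

Lemma Avg_M4 k b : Avg k (fun v => (Yl k b v)^4) <= 3 * (sumR k (fun j => b j ^ 2))^2.
Proof.
  induction k; [simpl Avg| rewrite Avg_S].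
  - unfold Yl; simpl; lra.
  - rewrite (Avg_ext k (fun v => Yl (S k) b (upd v k 1) ^ 4) (fun v => (Yl k b v + b k)^4))
      by (intros; rewrite Yl_upd; f_equal; lra).
    rewrite (Avg_ext k (fun v => Yl (S k) b (upd v k (-1)) ^ 4) (fun v => (Yl k b v - b k)^4))
      by (intros; rewrite Yl_upd; f_equal; lra).
    rewrite <- Avg_plus.
    rewrite (Avg_ext k _ (fun v => 2 * (Yl k b v ^4) + (12 * b k ^ 2 * (Yl k b v ^2) + 2 * (b k ^ 4))))
      by (intros; ring).
    rewrite !Avg_plus, !Avg_scal, Avg_const, Avg_M2. rewrite sumR_S.
    set (s := sumR k (fun j => b j ^ 2)) in *. assert (0 <= b k ^ 4) by (replace (b k ^ 4) with ((b k ^ 2)^2) by ring; nra). replace (3 * (s + b k ^ 2)^2) with (3 * s^2 + 6 * b k ^2 * s + 3 * b k ^ 4) by ring. lra.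
Qed.

Lemma CS_sum k b : (sumR k (fun j => Rabs (b j)))^2 <= INR k * sumR k (fun j => b j ^ 2).
Proof.
  induction k; [simpl; lra|]. rewrite !sumR_S.
  - set (S1 := sumR k (fun j => Rabs (b j))) in *.
    set (Q := sumR k (fun j => b j ^ 2)) in *.
    assert (HS : 0 <= S1).
    { unfold S1. rewrite <- (sumR_zero k). apply sumR_le. intros; apply Rabs_pos. }
    assert (HQ : 0 <= Q).
    { unfold Q. rewrite <- (sumR_zero k). apply sumR_le. intros; nra. }
    rewrite S_INR. pose proof (pos_INR k). set (K := INR k) in *.
    assert (Hb2 : Rabs (b k) ^ 2 = b k ^ 2) by apply Rabs_sq.
    set (a := Rabs (b k)) in *. assert (0 <= a) by apply Rabs_pos.
    assert (2 * S1 * a <= Q + K * a^2).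
    { destruct (Req_dec K 0) as [HK|HK].
      - assert (S1 = 0) by (rewrite HK in IHk; nra). subst; nra.
      - assert (K * (2 * S1 * a) <= K * (Q + K * a^2)) by (pose proof (pow2_ge_0 (S1 - K*a)); nra).
        apply Rmult_le_reg_l with K; lra. }
    rewrite <- Hb2. nra.
Qed.

Lemma poly_abs y s : 0 < s -> 3 * s^2 * y^2 - y^4 <= 2 * s^3 * Rabs y.
Proof.
  intros Hs. assert (Hy : y^2 = Rabs y ^ 2) by (symmetry; apply Rabs_sq).
  assert (Hy4 : y^4 = (Rabs y ^ 2)^2) by (rewrite <- Hy; ring).
  rewrite Hy4, Hy. set (t := Rabs y). assert (0 <= t) by apply Rabs_pos.
  assert (0 <= t * (t - s)^2 * (t + 2 * s)).
  { apply Rmult_le_pos; [apply Rmult_le_pos; [lra | apply pow2_ge_0]| lra]. }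
  replace ((t^2)^2) with (t^4) by ring. assert (E : t * (t - s)^2 * (t + 2 * s) = t^4 - 3*s^2*t^2 + 2*s^3*t) by ring. lra.
Qed.

Lemma khin k b : sumR k (fun j => Rabs (b j)) <= 2 * sqrt (INR k) * Avg k (fun v => Rabs (Yl k b v)).
Proof.
  set (L := sumR k (fun j => Rabs (b j))).
  set (Q := sumR k (fun j => b j ^ 2)).
  set (A := Avg k (fun v => Rabs (Yl k b v))).
  assert (HL : 0 <= L).
  { unfold L. rewrite <- (sumR_zero k). apply sumR_le. intros; apply Rabs_pos. }
  assert (HQ : 0 <= Q).
  { unfold Q. rewrite <- (sumR_zero k). apply sumR_le. intros; nra. }
  assert (HA : 0 <= A).
  { unfold A. rewrite <- (Avg_const k 0). apply Avg_mono. intros; apply Rabs_pos. }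
  assert (HCS := CS_sum k b). fold L Q in HCS.
  pose proof (sqrt_pos (INR k)) as Hsk. pose proof (sqrt_sqrt (INR k) (pos_INR k)) as Hsk2.
  set (rk := sqrt (INR k)) in *.
  destruct (Req_dec Q 0) as [HQ0|HQ0].
  - rewrite HQ0 in HCS. assert (L = 0) by nra. rewrite H. nra.
  - set (s := sqrt (3 * Q)).
    assert (Hs2 : s * s = 3 * Q) by (apply sqrt_sqrt; lra).
    assert (Hs : 0 < s) by (apply sqrt_lt_R0; lra).
    assert (Hmain : 3 * s^2 * Q - Avg k (fun v => (Yl k b v)^4) <= 2 * s^3 * A).
    { replace Q with (Avg k (fun v => Yl k b v ^2)) by (unfold Q; apply Avg_M2).
      unfold A. rewrite <- (Avg_scal k (3 * s^2)), <- (Avg_scal k (2 * s^3)).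
      assert (E : forall f g : (nat -> R) -> R, Avg k f - Avg k g = Avg k (fun v => f v + (-1) * g v)).
      { intros. rewrite Avg_plus, Avg_scal. lra. }
      rewrite E. apply Avg_mono. intros v _. pose proof (poly_abs (Yl k b v) s Hs). lra. }
    pose proof (Avg_M4 k b) as H4. fold Q in H4.
    assert (H6 : 6 * Q^2 <= 2 * s^3 * A) by (replace (s^2) with (3*Q) in Hmain by (simpl; lra); nra).
    assert (HAs : s / 3 <= A).
    { assert (2 * s^3 * (s/3) = 6 * Q^2).
      { replace (2 * s^3 * (s/3)) with (2/3 * (s*s)*(s*s)) by (field). rewrite Hs2. field. }
      assert (0 < 2 * s^3) by (apply Rmult_lt_0_compat; [lra| apply pow_lt; lra]).
      apply Rmult_le_reg_l with (2 * s^3); lra. }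
    assert (HL2 : L^2 <= (2 * rk * s / 3)^2).
    { replace ((2 * rk * s / 3)^2) with (4/9 * (rk*rk) * (s*s)) by field.
      rewrite Hsk2, Hs2. nra. }
    assert (L <= 2 * rk * s / 3).
    { assert (0 <= 2 * rk * s / 3) by (apply Rmult_le_pos; [nra|lra]). nra. }
    nra.
Qed.

Fixpoint ndec (l0 : R) (L : list R) : Prop :=
  match L with nil => True | h :: t => l0 <= h /\ ndec h t end.

Fixpoint pairs (l0 : R) (L : list R) : list (R * R) :=
  match L with nil => nil | h :: t => (l0, h) :: pairs h t end.

Fixpoint ins (v : R) (L : list R) : list R :=
  match L with
  | nil => v :: nil
  | h :: t => if Rle_dec v h then v :: h :: t else h :: ins v t
  end.

Fixpoint lastR (l0 : R) (L : list R) : R :=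
  match L with nil => l0 | h :: t => lastR h t end.

Lemma ins_ndec L : forall l0 v, ndec l0 L -> l0 <= v -> ndec l0 (ins v L).
Proof.
  induction L as [|h t IH]; simpl; intros l0 v H Hv; auto.
  destruct (Rle_dec v h); simpl; [tauto|].
  split; [tauto|]. apply IH; [tauto|lra].
Qed.

Lemma ins_In L v y : In y (ins v L) <-> v = y \/ In y L.
Proof.
  induction L as [|h t IH]; simpl; [tauto|].
  destruct (Rle_dec v h); simpl; [tauto|]. rewrite IH. tauto.
Qed.

Fixpoint build (V : list R) : list R :=
  match V with nil => nil | v :: V' => ins v (build V') end.

Lemma build_ndec V : (forall v, In v V -> 0 <= v) -> ndec 0 (build V).
Proof.
  induction V; simpl; intros H; auto. apply ins_ndec; auto.
Qed.

Lemma build_In V y : In y (build V) <-> In y V.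
Proof. induction V; simpl; [tauto|]. rewrite ins_In, IHV. tauto. Qed.

Lemma chain_ge L : forall l0 y, ndec l0 L -> In y L -> l0 <= y.
Proof.
  induction L as [|h t IH]; simpl; intros l0 y H Hy; [tauto|].
  destruct Hy as [<-|Hy]; [tauto|]. pose proof (IH h y (proj2 H) Hy). lra.
Qed.

Lemma pairs_le L : forall l0 pr, ndec l0 L -> In pr (pairs l0 L) -> fst pr <= snd pr.
Proof.
  induction L as [|h t IH]; simpl; intros l0 pr H Hp; [tauto|].
  destruct Hp as [<-|Hp]; simpl; [tauto|]. eapply IH; eauto. tauto.
Qed.

Lemma tele L : forall l0, lsum (fun pr => snd pr - fst pr) (pairs l0 L) = lastR l0 L - l0.
Proof.
  induction L as [|h t IH]; cbn [pairs lastR]; intros l0; [rewrite lsum_nil; lra|].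
  rewrite lsum_cons, IH. simpl. lra.
Qed.

Lemma lastR_in L : forall l0, lastR l0 L = l0 \/ In (lastR l0 L) L.
Proof.
  induction L as [|h t IH]; simpl; intros l0; [auto|].
  destruct (IH h); auto.
Qed.

Lemma lastR_ge L : forall l0 y, ndec l0 L -> In y (l0 :: L) -> y <= lastR l0 L.
Proof.
  induction L as [|h t IH]; simpl; intros l0 y H Hy.
  - destruct Hy as [<-|[]]; lra.
  - destruct Hy as [<-|Hy].
    + pose proof (IH h h (proj2 H) (or_introl eq_refl)). lra.
    + apply IH; [tauto| simpl; tauto].
Qed.

Definition indI (a c u : R) : R :=
  if Rle_dec a u then (if Rlt_dec u c then 1 else 0) else 0.

Definition lt1 (u g : R) : R := if Rlt_dec u g then 1 else 0.

Definition Fv (l0 : R) (L : list R) (g : R) : R :=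
  lsum (fun pr => (snd pr - fst pr) * lt1 (fst pr) g) (pairs l0 L).

Lemma F_le L : forall l0 g, ndec l0 L -> g <= l0 -> Fv l0 L g = 0.
Proof.
  induction L as [|h t IH]; unfold Fv in *; cbn [pairs ndec]; intros l0 g H Hg; [reflexivity|].
  rewrite lsum_cons, IH by (tauto || lra). unfold lt1. simpl.
  destruct (Rlt_dec l0 g); lra.
Qed.

Lemma F_in L : forall l0 g, ndec l0 L -> In g (l0 :: L) -> Fv l0 L g = g - l0.
Proof.
  induction L as [|h t IH]; unfold Fv in *; cbn [pairs ndec In]; intros l0 g H Hg.
  - destruct Hg as [<-|[]]. rewrite lsum_nil; lra.
  - rewrite lsum_cons. simpl fst; simpl snd. destruct Hg as [<-|Hg].
    + pose proof (F_le t h l0 (proj2 H) (proj1 H)) as H0. unfold Fv in H0.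
      rewrite H0. unfold lt1. destruct (Rlt_dec l0 l0); lra.
    + rewrite (IH h g (proj2 H) Hg).
      assert (h <= g).
      { destruct Hg as [<-|Hg]; [lra|]. eapply chain_ge; [apply (proj2 H)|exact Hg]. }
      unfold lt1. destruct (Rlt_dec l0 g); [lra|]. assert (l0 = g) by lra. lra.
Qed.

Lemma interval_sum L a c : ndec 0 L -> In a (0 :: L) -> In c (0 :: L) ->
  lsum (fun pr => (snd pr - fst pr) * indI a c (fst pr)) (pairs 0 L) = Rmax 0 (c - a).
Proof.
  intros H Ha Hc.
  destruct (Rle_dec a c).
  - rewrite (lsum_ext_In _ (fun pr => (snd pr - fst pr) * lt1 (fst pr) c - (snd pr - fst pr) * lt1 (fst pr) a)).
    + rewrite lsum_minus. fold (Fv 0 L c) (Fv 0 L a). rewrite !F_in by auto.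
      unfold Rmax; destruct (Rle_dec 0 (c - a)); lra.
    + intros pr _. unfold indI, lt1.
      destruct (Rle_dec a (fst pr)), (Rlt_dec (fst pr) c), (Rlt_dec (fst pr) a); lra.
  - rewrite (lsum_ext_In _ (fun pr => 0 * 0)).
    + unfold Rmax; destruct (Rle_dec 0 (c - a)); [lra|]. clear. induction (pairs 0 L); [reflexivity|].
      rewrite lsum_cons, IHl; lra.
    + intros pr _. unfold indI. destruct (Rle_dec a (fst pr)), (Rlt_dec (fst pr) c); lra.
Qed.

Lemma ind_mul a1 c1 a2 c2 u : indI a1 c1 u * indI a2 c2 u = indI (Rmax a1 a2) (Rmin c1 c2) u.
Proof.
  unfold indI, Rmax, Rmin.
  destruct (Rle_dec a1 a2), (Rle_dec c1 c2), (Rle_dec a1 u), (Rle_dec a2 u), (Rlt_dec u c1), (Rlt_dec u c2);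
  simpl; try lra;
  repeat match goal with |- context [Rle_dec ?x ?y] => destruct (Rle_dec x y) end;
  repeat match goal with |- context [Rlt_dec ?x ?y] => destruct (Rlt_dec x y) end; lra.
Qed.

Definition alpha (x σ : nat -> R) (i : nat) : R := if Rle_dec 0 (σ i) then 0 else 1 - x i.
Definition beta (x σ : nat -> R) (i : nat) : R := if Rle_dec 0 (σ i) then x i else 1.
Definition Ival (x σ : nat -> R) (e : nat * nat) : R :=
  Rmax 0 (Rmin (beta x σ (fst e)) (beta x σ (snd e)) - Rmax (alpha x σ (fst e)) (alpha x σ (snd e))).
Definition zs (E : list (nat * nat)) (a : nat -> nat -> R) (x σ : nat -> R) : R :=
  lsum (fun e => a (fst e) (snd e) * Ival x σ e) E.

Fixpoint vals (x : nat -> R) (n : nat) : list R :=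
  match n with O => [1] | S k => x k :: (1 - x k) :: vals x k end.

Lemma vals_x x n i : (i < n)%nat -> In (x i) (vals x n) /\ In (1 - x i) (vals x n).
Proof.
  induction n; intros Hi; [lia|]. simpl.
  destruct (Nat.eq_dec i n) as [->|]; [tauto|]. destruct IHn; [lia|tauto].
Qed.

Lemma vals_1 x n : In 1 (vals x n).
Proof. induction n; simpl; tauto. Qed.

Lemma vals_box x n : in_box n x -> forall y, In y (vals x n) -> 0 <= y <= 1.
Proof.
  induction n; simpl; intros Hb y Hy.
  - destruct Hy as [<-|[]]; lra.
  - assert (Hb' : in_box n x) by (intros i Hi; apply Hb; lia).
    pose proof (Hb n ltac:(lia)).
    destruct Hy as [<-|[<-|Hy]]; [lra|lra|]. apply IHn; auto.
Qed.

Lemma Rmax_or a b : Rmax a b = a \/ Rmax a b = b.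
Proof. unfold Rmax; destruct (Rle_dec a b); auto. Qed.
Lemma Rmin_or a b : Rmin a b = a \/ Rmin a b = b.
Proof. unfold Rmin; destruct (Rle_dec a b); auto. Qed.

Lemma conv_cut n E a x σ : is_graph n E -> in_box n x ->
  in_convB n E a x (zs E a x σ).
Proof.
  intros HG Hb.
  set (L := build (vals x n)).
  set (P := pairs 0 L).
  assert (Lnd : ndec 0 L).
  { apply build_ndec. intros v Hv. apply (vals_box x n Hb v Hv). }
  assert (Lin : forall y, In y L <-> In y (vals x n)) by (intros; apply build_In).
  assert (Hal : forall i, (i < n)%nat -> In (alpha x σ i) (0 :: L)).
  { intros i Hi. unfold alpha. destruct (Rle_dec 0 (σ i)); [left; auto|right].
    apply Lin. apply vals_x; auto. }
  assert (Hbe : forall i, (i < n)%nat -> In (beta x σ i) (0 :: L)).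
  { intros i Hi. unfold beta. destruct (Rle_dec 0 (σ i)); right; apply Lin;
    [apply vals_x; auto| apply vals_1]. }
  assert (Hlast : lastR 0 L = 1).
  { apply Rle_antisym.
    - destruct (lastR_in L 0) as [->|Hi]; [lra|]. apply Lin in Hi. apply (vals_box x n Hb _ Hi).
    - apply lastR_ge; auto. right. apply Lin, vals_1. }
  exists (length P),
    (fun k => snd (nth k P (0,0)) - fst (nth k P (0,0))),
    (fun k i => indI (alpha x σ i) (beta x σ i) (fst (nth k P (0,0)))).
  split; [|split; [|split; [|split]]].
  - intros k Hk. pose proof (pairs_le L 0 (nth k P (0,0)) Lnd (nth_In P (0,0) Hk)). lra.
  - pose proof (sumR_nth P (fun pr => snd pr - fst pr)) as Hs. cbv beta in Hs. rewrite Hs.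
    unfold P. rewrite tele, Hlast. lra.
  - intros k Hk i Hi. unfold indI. destruct (Rle_dec _ _); [destruct (Rlt_dec _ _)|]; lra.
  - intros i Hi.
    pose proof (sumR_nth P (fun pr => (snd pr - fst pr) * indI (alpha x σ i) (beta x σ i) (fst pr))) as Hs.
    cbv beta in Hs. rewrite Hs. unfold P. rewrite interval_sum by auto.
    pose proof (Hb i Hi). unfold alpha, beta. destruct (Rle_dec 0 (σ i));
    unfold Rmax; destruct (Rle_dec _ _); lra.
  - pose proof (sumR_nth P (fun pr => (snd pr - fst pr) *
       lsum (fun e => a (fst e) (snd e) * indI (alpha x σ (fst e)) (beta x σ (fst e)) (fst pr)
                                       * indI (alpha x σ (snd e)) (beta x σ (snd e)) (fst pr)) E)) as Hs.
    cbv beta in Hs. unfold bilin. unfold lsum at 1 in Hs. rewrite Hs.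
    rewrite (lsum_swap (fun pr => snd pr - fst pr)
       (fun e pr => a (fst e) (snd e) * indI (alpha x σ (fst e)) (beta x σ (fst e)) (fst pr)
                                       * indI (alpha x σ (snd e)) (beta x σ (snd e)) (fst pr))).
    unfold zs. apply lsum_ext_In. intros e He.
    destruct HG as [_ HE]. destruct e as [i j]. pose proof (HE i j He) as Hij. simpl fst; simpl snd.
    rewrite (lsum_ext_In _ (fun pr => a i j * ((snd pr - fst pr) *
       indI (Rmax (alpha x σ i) (alpha x σ j)) (Rmin (beta x σ i) (beta x σ j)) (fst pr)))).
    + rewrite lsum_scal. unfold P. rewrite interval_sum; auto.
      * destruct (Rmax_or (alpha x σ i) (alpha x σ j)) as [->| ->]; apply Hal; lia.
      * destruct (Rmin_or (beta x σ i) (beta x σ j)) as [->| ->]; apply Hbe; lia.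
    + intros pr _. rewrite <- ind_mul. ring.
Qed.

Definition Uu (x : nat -> R) (e : nat * nat) : R := Rmin (x (fst e)) (x (snd e)).
Definition Lo (x : nat -> R) (e : nat * nat) : R := Rmax 0 (x (fst e) + x (snd e) - 1).
Definition ce (a : nat -> nat -> R) (x : nat -> R) (e : nat * nat) : R :=
  a (fst e) (snd e) * (Uu x e - Lo x e).

Definition cterm (c : R) (e : nat * nat) (i j : nat) : R :=
  (if andb (Nat.eqb (fst e) i) (Nat.eqb (snd e) j) then c else 0) +
  (if andb (Nat.eqb (fst e) j) (Nat.eqb (snd e) i) then c else 0).

Definition cm (E : list (nat * nat)) (a : nat -> nat -> R) (x : nat -> R) (i j : nat) : R :=
  lsum (fun e => cterm (ce a x e) e i j) E.

Lemma delta2 n M a b c : (a < n)%nat -> (b < n)%nat ->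
  sumR n (fun i => sumR n (fun j => M i j * (if andb (Nat.eqb a i) (Nat.eqb b j) then c else 0))) = c * M a b.
Proof.
  intros Ha Hb.
  rewrite (sumR_ext n _ (fun i => if Nat.eqb a i then c * M i b else 0)).
  - apply (sumR_delta n a (fun i => c * M i b)); auto.
  - intros i Hi. destruct (Nat.eqb a i); simpl.
    + rewrite (sumR_ext n _ (fun j => if Nat.eqb b j then M i j * c else 0)).
      * rewrite (sumR_delta n b (fun j => M i j * c)); auto; ring.
      * intros j Hj. destruct (Nat.eqb b j); ring.
    + apply sumR_zero_ext. intros; ring.
Qed.

Lemma swap_gen n E a x M : (forall e, In e E -> (fst e < n)%nat /\ (snd e < n)%nat) ->
  sumR n (fun i => sumR n (fun j => M i j * cm E a x i j)) =
  lsum (fun e => ce a x e * (M (fst e) (snd e) + M (snd e) (fst e))) E.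
Proof.
  induction E as [|f E IH]; intros HE.
  - rewrite lsum_nil. apply sumR_zero_ext. intros i _.
    apply sumR_zero_ext. intros j _. unfold cm. rewrite lsum_nil. ring.
  - rewrite lsum_cons. rewrite <- IH by (intros; apply HE; simpl; auto).
    destruct (HE f (or_introl eq_refl)) as [H1 H2].
    rewrite Rmult_plus_distr_l.
    rewrite <- (delta2 n M (fst f) (snd f) (ce a x f)) by auto.
    rewrite <- (delta2 n M (snd f) (fst f) (ce a x f)) by auto.
    rewrite <- !sumR_plus. apply sumR_ext. intros i _.
    rewrite <- !sumR_plus. apply sumR_ext. intros j _.
    unfold cm. rewrite lsum_cons. unfold cterm.
    rewrite (andb_comm (Nat.eqb (fst f) j)). ring.
Qed.

Lemma cterm_other c f i j : (fst f < snd f)%nat -> (i < j)%nat -> f <> (i, j) -> cterm c f i j = 0.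
Proof.
  intros Hf Hij Hne. unfold cterm. destruct f as [f1 f2]. simpl in *.
  destruct (Nat.eqb f1 i) eqn:E1, (Nat.eqb f2 j) eqn:E2, (Nat.eqb f1 j) eqn:E3, (Nat.eqb f2 i) eqn:E4;
  simpl; try ring;
  repeat match goal with H : Nat.eqb _ _ = true |- _ => apply Nat.eqb_eq in H end;
  subst; try lia; exfalso; apply Hne; auto.
Qed.

Lemma cterm_same c i j : (i < j)%nat -> cterm c (i, j) i j = c.
Proof.
  intros H. unfold cterm. simpl. rewrite !Nat.eqb_refl. simpl.
  destruct (Nat.eqb i j) eqn:E; [apply Nat.eqb_eq in E; lia|]. simpl. ring.
Qed.

Lemma cm_notin E a x i j : (forall f, In f E -> (fst f < snd f)%nat) -> (i < j)%nat ->
  ~ In (i, j) E -> cm E a x i j = 0.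
Proof.
  induction E as [|f E IH]; intros HE Hij Hn; unfold cm in *; [reflexivity|].
  rewrite lsum_cons. rewrite cterm_other; auto.
  - rewrite IH; auto. + ring. + intros; apply HE; simpl; auto. + intros H; apply Hn; simpl; auto.
  - apply HE; simpl; auto.
  - intros ->. apply Hn; simpl; auto.
Qed.

Lemma cm_edge E a x e : NoDup E -> (forall f, In f E -> (fst f < snd f)%nat) -> In e E ->
  cm E a x (fst e) (snd e) = ce a x e.
Proof.
  induction E as [|f E IH]; intros ND HE He; [destruct He|].
  inversion ND; subst. unfold cm. rewrite lsum_cons. destruct He as [<-|He].
  - destruct f as [i j]. simpl. rewrite cterm_same by (apply (HE (i,j)); simpl; auto).
    fold (cm E a x i j). rewrite cm_notin; auto. + ring. + intros; apply HE; simpl; auto.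
    + apply (HE (i,j)); simpl; auto.
  - destruct e as [i j]. simpl. rewrite cterm_other.
    + fold (cm E a x i j). pose proof (IH H2 ltac:(intros; apply HE; simpl; auto) He) as IH'.
      simpl in IH'. rewrite IH'. ring.
    + apply HE; simpl; auto.
    + apply (HE (i,j)); simpl; auto.
    + intros ->. auto.
Qed.

Definition wgt (i j : nat) : R := if Nat.eqb i j then 0 else 1.

Lemma sign_trick n E a x : NoDup E -> (forall f, In f E -> (fst f < snd f)%nat /\ (snd f < n)%nat) ->
  lsum (fun e => Rabs (ce a x e)) E <=
  sumR n (fun i => sumR n (fun j => wgt i j * Rabs (cm E a x i j))).
Proof.
  intros ND HE.
  set (s := fun i j => if Nat.ltb i j then (if Rle_dec 0 (cm E a x i j) then 1 else -1) else 0).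
  apply Rle_trans with (sumR n (fun i => sumR n (fun j => (wgt i j * s i j) * cm E a x i j))).
  - rewrite swap_gen by (intros e He; destruct (HE e He); lia).
    right. apply lsum_ext_In. intros e He. destruct (HE e He) as [H1 H2].
    unfold wgt, s. rewrite (cm_edge E a x e ND) by (auto; intros; apply HE; auto).
    destruct (Nat.eqb (fst e) (snd e)) eqn:E1; [apply Nat.eqb_eq in E1; lia|].
    destruct (Nat.eqb (snd e) (fst e)) eqn:E2; [apply Nat.eqb_eq in E2; lia|].
    destruct (Nat.ltb (fst e) (snd e)) eqn:E3; [|apply Nat.ltb_ge in E3; lia].
    destruct (Nat.ltb (snd e) (fst e)) eqn:E4; [apply Nat.ltb_lt in E4; lia|].
    destruct (Rle_dec 0 (ce a x e)); [rewrite Rabs_right by lra| rewrite Rabs_left by lra]; ring.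
  - apply sumR_le. intros i _. apply sumR_le. intros j _. unfold wgt, s.
    destruct (Nat.eqb i j), (Nat.ltb i j); try (rewrite Rmult_0_l; rewrite Rmult_0_l; try apply Rle_refl);
    try destruct (Rle_dec 0 (cm E a x i j)); 
    repeat match goal with |- context [Rabs ?z] => destruct (Rcase_abs z); [rewrite (Rabs_left z) by lra| rewrite (Rabs_right z) by lra] end;
    try lra.
Qed.

Lemma Ival_formula x σ e : (σ (fst e) = 1 \/ σ (fst e) = -1) -> (σ (snd e) = 1 \/ σ (snd e) = -1) ->
  0 <= x (fst e) <= 1 -> 0 <= x (snd e) <= 1 ->
  Ival x σ e = (Uu x e + Lo x e) / 2 + (Uu x e - Lo x e) * σ (fst e) * σ (snd e) / 2.
Proof.
  intros H1 H2 Hx1 Hx2. unfold Ival, Uu, Lo, alpha, beta.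
  destruct H1 as [-> | ->]; destruct H2 as [-> | ->];
  repeat match goal with |- context [Rle_dec ?u ?v] => destruct (Rle_dec u v) end;
  unfold Rmax, Rmin;
  repeat match goal with |- context [Rle_dec ?u ?v] => destruct (Rle_dec u v) | H : context [Rle_dec ?u ?v] |- _ => destruct (Rle_dec u v) end; lra.
Qed.

Definition pp (t : nat -> R) (i : nat) : R := (1 + t i) / 2.
Definition qq (t : nat -> R) (i : nat) : R := (1 - t i) / 2.

Lemma pq_signs t i : t i = 1 \/ t i = -1 -> 0 <= pp t i /\ 0 <= qq t i.
Proof. unfold pp, qq; intros [-> | ->]; lra. Qed.

Lemma Avg_pq n i j : (i < n)%nat -> (j < n)%nat -> Avg n (fun t => pp t i * qq t j) = wgt i j / 4.
Proof.
  intros Hi Hj.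
  rewrite (Avg_ext n _ (fun t => (1/4) * 1 + ((1/4) * t i + ((-1/4) * t j + (-1/4) * (t i * t j))))).
  2: { intros t _. unfold pp, qq. field. }
  rewrite !Avg_plus, !Avg_scal, Avg_const, !Avg_m1, Avg_m2 by auto.
  unfold wgt. destruct (Nat.eqb i j); lra.
Qed.

Lemma mc_bound n E a x y y' : is_graph n E -> in_box n x -> in_P n E x y -> in_P n E x y' ->
  fold_right (fun e acc => a (fst e) (snd e) * y (fst e) (snd e) + acc) 0 E -
  fold_right (fun e acc => a (fst e) (snd e) * y' (fst e) (snd e) + acc) 0 E <=
  lsum (fun e => Rabs (ce a x e)) E.
Proof.
  intros [_ HG] Hb [_ HP] [_ HP'].
  change (lsum (fun e => a (fst e) (snd e) * y (fst e) (snd e)) E -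
          lsum (fun e => a (fst e) (snd e) * y' (fst e) (snd e)) E <= lsum (fun e => Rabs (ce a x e)) E).
  rewrite <- lsum_minus. apply lsum_le_In. intros [i j] He. simpl.
  destruct (HG i j He) as [Hij Hjn]. pose proof (Hb i ltac:(lia)). pose proof (Hb j Hjn).
  pose proof (HP i j He) as H1. pose proof (HP' i j He) as H2.
  unfold ce, Uu, Lo. simpl. rewrite Rabs_mult.
  assert (Hy : Rmax 0 (x i + x j - 1) <= y i j <= Rmin (x i) (x j)).
  { unfold Rmax, Rmin. destruct (Rle_dec 0 _), (Rle_dec (x i) (x j)); lra. }
  assert (Hy' : Rmax 0 (x i + x j - 1) <= y' i j <= Rmin (x i) (x j)).
  { unfold Rmax, Rmin. destruct (Rle_dec 0 _), (Rle_dec (x i) (x j)); lra. }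
  rewrite (Rabs_right (Rmin (x i) (x j) - Rmax 0 (x i + x j - 1))) by lra.
  destruct (Rcase_abs (a i j)); [rewrite Rabs_left by lra| rewrite Rabs_right by lra]; nra.
Qed.

Definition Gf n E a x (t v : nat -> R) : R :=
  sumR n (fun i => pp t i * Rabs (Yl n (fun j => cm E a x i j * qq t j) v)).

Lemma lemB1 n E a x t : signs n t ->
  sumR n (fun i => sumR n (fun j => Rabs (cm E a x i j) * (pp t i * qq t j))) <=
  2 * sqrt (INR n) * Avg n (Gf n E a x t).
Proof.
  intros Ht. unfold Gf. rewrite (Avg_sumR n n (fun i v => pp t i * Rabs (Yl n (fun j => cm E a x i j * qq t j) v))).
  rewrite <- sumR_scal. apply sumR_le. intros i Hi.
  rewrite Avg_scal. destruct (pq_signs t i (Ht i Hi)) as [Hp _].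
  pose proof (khin n (fun j => cm E a x i j * qq t j)) as K. cbv beta in K.
  rewrite (sumR_ext n _ (fun j => pp t i * (Rabs (cm E a x i j * qq t j)))).
  - rewrite sumR_scal. nra.
  - intros j Hj. destruct (pq_signs t j (Ht j Hj)) as [_ Hq].
    rewrite Rabs_mult, (Rabs_right (qq t j)) by lra. ring.
Qed.

Lemma lemB2 n E a x :
  Avg n (fun t => sumR n (fun i => sumR n (fun j => Rabs (cm E a x i j) * (pp t i * qq t j)))) =
  sumR n (fun i => sumR n (fun j => wgt i j * Rabs (cm E a x i j))) / 4.
Proof.
  rewrite (Avg_sumR n n (fun i t => sumR n (fun j => Rabs (cm E a x i j) * (pp t i * qq t j)))).
  unfold Rdiv. rewrite Rmult_comm, <- sumR_scal. apply sumR_ext. intros i Hi.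
  rewrite (Avg_sumR n n (fun j t => Rabs (cm E a x i j) * (pp t i * qq t j))).
  rewrite <- sumR_scal. apply sumR_ext. intros j Hj.
  rewrite Avg_scal, Avg_pq by auto. lra.
Qed.

Lemma lemB5 n E a x t v : is_graph n E -> in_box n x -> signs n t -> signs n v ->
  exists σ τ, Gf n E a x t v = zs E a x σ - zs E a x τ.
Proof.
  intros HG Hb Ht Hv.
  set (y := fun i => Yl n (fun j => cm E a x i j * qq t j) v).
  set (u := fun i => if Rle_dec 0 (y i) then 1 else -1).
  set (A := fun i => pp t i * u i).
  set (B := fun j => qq t j * v j).
  exists (fun i => A i + B i), (fun i => - A i + B i).
  assert (HEb : forall e, In e E -> (fst e < n)%nat /\ (snd e < n)%nat).
  { intros [i j] He. destruct HG as [_ HG]. destruct (HG i j He); simpl; lia. }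
  assert (Hsig : forall i, (i < n)%nat -> (A i + B i = 1 \/ A i + B i = -1) /\ (- A i + B i = 1 \/ - A i + B i = -1)).
  { intros i Hi. unfold A, B, u, pp, qq.
    destruct (Ht i Hi) as [-> | ->]; destruct (Hv i Hi) as [-> | ->];
    destruct (Rle_dec 0 (y i)); lra. }
  transitivity (sumR n (fun i => sumR n (fun j => (A i * B j) * cm E a x i j))).
  - unfold Gf. apply sumR_ext. intros i Hi. fold (y i).
    rewrite (sumR_ext n (fun j => A i * B j * cm E a x i j) (fun j => A i * (cm E a x i j * qq t j * v j)))
      by (intros; unfold B; ring).
    rewrite sumR_scal. fold (Yl n (fun j => cm E a x i j * qq t j) v). fold (y i).
    unfold A, u. destruct (Rle_dec 0 (y i)); [rewrite Rabs_right by lra| rewrite Rabs_left by lra]; ring.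
  - rewrite (swap_gen n E a x (fun i j => A i * B j)) by auto.
    unfold zs. rewrite <- lsum_minus. apply lsum_ext_In. intros e He.
    destruct (HEb e He) as [H1 H2].
    destruct (Hsig _ H1) as [S1 T1]. destruct (Hsig _ H2) as [S2 T2].
    rewrite (Ival_formula x (fun i => A i + B i) e) by (auto; apply Hb; auto).
    rewrite (Ival_formula x (fun i => - A i + B i) e) by (auto; apply Hb; auto).
    unfold ce. generalize (A (fst e)) (A (snd e)) (B (fst e)) (B (snd e)) (Uu x e) (Lo x e) (a (fst e) (snd e)). intros r1 r2 r3 r4 r5 r6 r7. field.
Qed.

Theorem theorem2 (n : nat) (E : list (nat * nat)) (a : nat -> nat -> R)
    (x : nat -> R) (zc zv zu zl : R) :
  is_graph n E ->
  in_box n x ->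
  is_max (in_convB n E a x) zc ->
  is_min (in_convB n E a x) zv ->
  is_max (in_Q n E a x) zu ->
  is_min (in_Q n E a x) zl ->
  zu - zl <= 600 * sqrt (INR n) * (zc - zv).
Proof.
  intros HG Hb Hmax Hmin Hqmax Hqmin.
  set (W := lsum (fun e => Rabs (ce a x e)) E).
  assert (HA : zu - zl <= W).
  { destruct Hqmax as [[y [HPy Hzu]] _]. destruct Hqmin as [[y' [HPy' Hzl]] _].
    rewrite Hzu, Hzl. apply (mc_bound n E a x y y'); auto. }
  assert (Hcv : zv <= zc) by (apply (proj2 Hmin); apply (proj1 Hmax)).
  pose proof (sqrt_pos (INR n)) as Hsq.
  assert (HB : W <= 8 * sqrt (INR n) * (zc - zv)).
  { assert (HW : W <= sumR n (fun i => sumR n (fun j => wgt i j * Rabs (cm E a x i j)))).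
    { destruct HG as [ND HG']. apply sign_trick; auto.
      intros [i j] He. destruct (HG' i j He). simpl; lia. }
    assert (H2 : Avg n (fun t => sumR n (fun i => sumR n (fun j => Rabs (cm E a x i j) * (pp t i * qq t j))))
                 <= 2 * sqrt (INR n) * Avg n (fun t => Avg n (Gf n E a x t))).
    { apply Rle_trans with (Avg n (fun t => 2 * sqrt (INR n) * Avg n (Gf n E a x t))); [apply Avg_mono; intros t Ht; apply lemB1; auto| rewrite Avg_scal; lra]. }
    rewrite lemB2 in H2.
    destruct (Avg_exists n (fun t => Avg n (Gf n E a x t))) as [t [Ht Hts]].
    destruct (Avg_exists n (Gf n E a x t)) as [v [Hv Hvs]].
    destruct (lemB5 n E a x t v HG Hb Ht Hv) as [σ [τ Hst]].
    assert (Hc : zs E a x σ <= zc) by (apply (proj2 Hmax); apply conv_cut; auto).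
    assert (Hd : zv <= zs E a x τ) by (apply (proj2 Hmin); apply conv_cut; auto).
    assert (Avg n (fun t => Avg n (Gf n E a x t)) <= zc - zv) by lra.
    assert (2 * sqrt (INR n) * Avg n (fun t => Avg n (Gf n E a x t)) <= 2 * sqrt (INR n) * (zc - zv))
      by (apply Rmult_le_compat_l; lra).
    lra. }
  assert (0 <= sqrt (INR n) * (zc - zv)) by (apply Rmult_le_pos; lra).
  nra.
Qed.
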